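(* Let $(E,\mathscr{T},\le)$ be a $T_2$-preordered Tychonoff space such that, with $\mathcal{F}$ the family of continuous isotone functions $f:E\to[0,1]$, $G(\le)=\bigcap_{f\in\mathcal{F}}G_f$. Let $(\beta E,\mathscr{T}_\beta,\le_\beta)$ be the Stone–Čech compactification $\beta:E\to\beta E$ endowed with the preorder $G(\le_\beta)=\bigcap_{f\in\mathcal{F}}G_{\tilde f}$, where $\tilde f:\beta E\to[0,1]$ is the unique continuous extension of $f\circ\beta^{-1}$. Let $c:E\to cE$ be a Hausdorff $T_2$-preorder compactification $(cE,\mathscr{T}_c,\le_c)$ such that (a) every continuous function $f:E\to[0,1]$ can be extended to a continuous function on $cE$ (i.e. $f\circ c^{-1}$ extends), and (b) every continuous isotone function $f:E\to[0,1]$ can be extended to a continuous isotone function on $(cE,\le_c)$. Then $c$ is equivalent to $\beta:E\to(\beta E,\mathscr{T}_\beta,\le_\beta)$.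
   Context: A topological preordered space is $(E,\mathscr{T},\le)$ with $\le$ a preorder; it is $T_2$-preordered if $G(\le)=\{(x,y):x\le y\}$ is closed in $E\times E$. Isotone: $x\le y\Rightarrow f(x)\le f(y)$. $G_f=\{(x,y):f(x)\le f(y)\}$. A preorder compactification is a preorder embedding (continuous isotone injective map which is a homeomorphism onto its image with isotone inverse for the induced preorder) $c:E\to cE$ into a compact topological preordered space with dense image; Hausdorff $T_2$-preorder compactification: additionally $cE$ Hausdorff and $\le_c$ closed. $c_1\le c_2$ means there is a continuous isotone $C:c_2E\to c_1E$ with $C\circ c_2=c_1$; equivalent means $c_1\le c_2$ and $c_2\le c_1$. *)

(* Defs.v *)
From HB Require Import structures.
From mathcomp Require Import all_boot all_order all_algebra.
From mathcomp Require Import all_classical all_reals.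
From mathcomp Require Import topology normedtype.
Set Implicit Arguments. Unset Strict Implicit. Unset Printing Implicit Defensive.
Import Order.TTheory GRing.Theory Num.Theory.
Import numFieldNormedType.Exports.
Local Open Scope classical_set_scope.
Local Open Scope ring_scope.

Definition unit_valued {R : realType} {T : Type} (f : T -> R) : Prop :=
  forall x, 0 <= f x <= 1.

Definition tychonoff_space (R : realType) (T : topologicalType) : Prop :=
  hausdorff_space T /\
  forall (x : T) (B : set T), closed B -> ~ B x ->
    exists f : T -> R, [/\ continuous f, unit_valued f, f x = 0 &
                          forall y, B y -> f y = 1].

Definition preorder_rel {T : Type} (le : T -> T -> Prop) : Prop :=
  (forall x, le x x) /\ (forall x y z, le x y -> le y z -> le x z).

Definition closed_preorder {T : topologicalType} (le : T -> T -> Prop) : Prop :=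
  closed [set p : T * T | le p.1 p.2].

Definition isotone {T U : Type} (leT : T -> T -> Prop) (leU : U -> U -> Prop)
  (f : T -> U) : Prop := forall x y, leT x y -> leU (f x) (f y).

Definition cont_isotone_unit (R : realType) {E : topologicalType}
  (le : E -> E -> Prop) (f : E -> R) : Prop :=
  [/\ continuous f, unit_valued f & isotone le (fun a b : R => a <= b) f].

Definition top_embedding {T U : topologicalType} (c : T -> U) : Prop :=
  [/\ continuous c, injective c &
      forall A : set T, open A ->
        exists V : set U, open V /\ c @` A = V `&` range c].

Definition preorder_embedding {T U : topologicalType}
  (leT : T -> T -> Prop) (leU : U -> U -> Prop) (c : T -> U) : Prop :=
  top_embedding c /\ forall x y, leT x y <-> leU (c x) (c y).

Definition hausdorff_T2_preorder_compactification {E cE : topologicalType}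
  (le : E -> E -> Prop) (lec : cE -> cE -> Prop) (c : E -> cE) : Prop :=
  [/\ compact [set: cE], hausdorff_space cE, preorder_rel lec,
      closed_preorder lec & preorder_embedding le lec c /\ dense (range c)].

Definition stone_cech {E bE : topologicalType} (b : E -> bE) : Prop :=
  [/\ compact [set: bE], hausdorff_space bE, top_embedding b, dense (range b) &
      forall (K : topologicalType) (g : E -> K),
        compact [set: K] -> hausdorff_space K -> continuous g ->
        exists h : bE -> K, continuous h /\ forall x, h (b x) = g x].

(* The preorder on bE:  u <=_b v  iff  for every f in F, f~ u <= f~ v, where
   f~ is the (unique, by density and Hausdorffness of R) continuous extension
   of f o b^-1 to bE. *)
Definition le_beta (R : realType) {E bE : topologicalType}
  (le : E -> E -> Prop) (b : E -> bE) (u v : bE) : Prop :=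
  forall f : E -> R, cont_isotone_unit le f ->
  forall g : bE -> R, continuous g -> (forall x, g (b x) = f x) -> g u <= g v.

Definition compactification_le {E c1E c2E : topologicalType}
  (le1 : c1E -> c1E -> Prop) (le2 : c2E -> c2E -> Prop)
  (c1 : E -> c1E) (c2 : E -> c2E) : Prop :=
  exists C : c2E -> c1E, [/\ continuous C, isotone le2 le1 C &
                            forall x, C (c2 x) = c1 x].

Definition compactification_equiv {E c1E c2E : topologicalType}
  (le1 : c1E -> c1E -> Prop) (le2 : c2E -> c2E -> Prop)
  (c1 : E -> c1E) (c2 : E -> c2E) : Prop :=
  compactification_le le1 le2 c1 c2 /\ compactification_le le2 le1 c2 c1.

(* Main.v *)
Require Import Defs.
From HB Require Import structures.
From mathcomp Require Import all_boot all_order all_algebra.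
From mathcomp Require Import all_classical all_reals.
From mathcomp Require Import topology normedtype.
From mathcomp Require Import zify ring lra.
Import Order.TTheory GRing.Theory Num.Theory.
Import numFieldNormedType.Exports.
Local Open Scope classical_set_scope.
Local Open Scope ring_scope.
Set Implicit Arguments. Unset Strict Implicit. Unset Printing Implicit Defensive.
Definition qd {R : realType} (n k : nat) : R := k%:R / (2 ^ n)%:R.

Lemma qd_ge0 (R : realType) n k : 0 <= qd n k :> R.
Proof. by rewrite /qd divr_ge0 // ler0n. Qed.

Lemma qd_le1 (R : realType) n k : (k <= 2 ^ n)%N -> qd n k <= 1 :> R.
Proof. by move=> h; rewrite /qd ler_pdivrMr ?ltr0n ?expn_gt0 // mul1r ler_nat. Qed.

Lemma qd_lt1 (R : realType) n k : qd n k < 1 :> R -> (k <= 2 ^ n)%N.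
Proof. by rewrite /qd ltr_pdivrMr ?ltr0n ?expn_gt0 // mul1r ltr_nat => /ltnW. Qed.

Lemma qd_lt (R : realType) n k m j :
  (qd n k < qd m j :> R) = (k * 2 ^ m < j * 2 ^ n)%N.
Proof.
rewrite /qd ltr_pdivrMr ?ltr0n ?expn_gt0 // mulrAC ltr_pdivlMr ?ltr0n ?expn_gt0 //.
by rewrite -!natrM ltr_nat.
Qed.

Lemma dyadic_dense (R : realType) (a c : R) : 0 <= a -> a < c ->
  exists n k, a < qd n k < c.
Proof.
move=> a0 ac.
set N := (Num.trunc ((c - a)^-1)).+1.
have hN : (c - a)^-1 < N%:R := truncnS_gt _.
have h2 : N%:R <= (2 ^ N)%:R :> R by rewrite ler_nat ltnW // ltn_expl.
have p2 : 0 < (2 ^ N)%:R :> R by rewrite ltr0n expn_gt0.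
have ca : 0 < c - a by rewrite subr_gt0.
have h1 : 1 < c * (2 ^ N)%:R - a * (2 ^ N)%:R.
  have h3 : (c - a) * (c - a)^-1 < (c - a) * (2 ^ N)%:R.
    by rewrite ltr_pM2l // (lt_le_trans hN h2).
  by rewrite mulfV ?gt_eqF // mulrBl in h3.
set k := (Num.trunc (a * (2 ^ N)%:R)).+1.
have ha : 0 <= a * (2 ^ N)%:R by rewrite mulr_ge0 // ltW.
have [t1 t2] := andP (truncn_itv ha).
exists N, k; apply/andP; split.
  by rewrite /qd ltr_pdivlMr.
rewrite /qd ltr_pdivrMr // /k -natr1.
set T := (Num.trunc _)%:R in t1 t2 *; lra.
Qed.
Section Hulls.
Context (X : topologicalType) (le : X -> X -> Prop).
Hypothesis cptX : compact [set: X].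
Hypothesis pre : preorder_rel le.
Hypothesis clG : closed_preorder le.

Definition dnc (S : set X) := [set y | exists2 x, S x & le y x].
Definition upc (S : set X) := [set y | exists2 x, S x & le x y].
Definition isdec (S : set X) := forall x y, le x y -> S y -> S x.

Lemma nbhs_notle (x y : X) : ~ le x y ->
  filter_prod (nbhs x) (nbhs y) [set p | ~ le p.1 p.2].
Proof.
move=> nxy.
have : open (~` [set p : X * X | le p.1 p.2]) by exact: closed_openC.
rewrite openE => /(_ (x, y) nxy). by [].
Qed.

Lemma closed_dnc S : closed S -> closed (dnc S).
Proof.
move=> clS; have cS : compact S := subclosed_compact clS cptX (@subsetT _ S).
rewrite -[dnc S]setCK; apply: open_closedC; rewrite openE => y ndy.
have cov : forall x, S x -> \forall x' \near x & i \near nbhs y, ~ le i x'.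
  move=> x Sx; have nyx : ~ le y x by move=> yx; apply: ndy; exists x.
  have [[P1 P2] [/= P1y P2x] sub] := nbhs_notle nyx.
  exists (P2, P1) => //= -[a b] /= [P2a P1b]; exact: (sub (b, a)).
have := (proj1 (compact_near_coveringP S) cS) X (nbhs y) (fun i x' => ~ le i x') _ cov.
move=> /(_ (nbhs_filter y)) nP; apply: (filterS _ nP) => i Pi [x Sx ix]; exact: (Pi x Sx ix).
Qed.

Lemma closed_upc S : closed S -> closed (upc S).
Proof.
move=> clS; have cS : compact S := subclosed_compact clS cptX (@subsetT _ S).
rewrite -[upc S]setCK; apply: open_closedC; rewrite openE => y ndy.
have cov : forall x, S x -> \forall x' \near x & i \near nbhs y, ~ le x' i.
  move=> x Sx; have nyx : ~ le x y by move=> yx; apply: ndy; exists x.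
  have [[P1 P2] [/= P1y P2x] sub] := nbhs_notle nyx.
  by exists (P1, P2).
have := (proj1 (compact_near_coveringP S) cS) X (nbhs y) (fun i x' => ~ le x' i) _ cov.
move=> /(_ (nbhs_filter y)) nP; apply: (filterS _ nP) => i Pi [x Sx ix]; exact: (Pi x Sx ix).
Qed.
End Hulls.
Section Interp.
Context (X : topologicalType) (le : X -> X -> Prop).
Hypothesis cptX : compact [set: X].
Hypothesis hX : hausdorff_space X.
Hypothesis pre : preorder_rel le.
Hypothesis clG : closed_preorder le.

Definition interp_pre (KU : set X * set X) :=
  [/\ closed KU.1, isdec le KU.1, open KU.2, isdec le KU.2 & KU.1 `<=` KU.2].
Definition interp_post (KU VL : set X * set X) :=
  [/\ open VL.1, isdec le VL.1, closed VL.2, isdec le VL.2 &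
      [/\ KU.1 `<=` VL.1, VL.1 `<=` VL.2 & VL.2 `<=` KU.2]].

Lemma interp_ex (KU : set X * set X) :
  exists VL, interp_pre KU -> interp_post KU VL.
Proof.
case: (pselect (interp_pre KU)); last by move=> h; exists (set0, set0).
case: KU => K U [/= clK dK oU dU KU]; move: (pre) => [refl trans].
have sK : set_nbhs K U.
  by move=> x Kx; rewrite /= nbhsE; exists U => //; split => //; exact: KU.
have [W sW clWU] := compact_normal hX cptX clK sK.
pose W0 := W°.
have oW0 : open W0 by exact: open_interior.
have KW0 : K `<=` W0 by move=> x Kx; exact: sW.
exists (~` upc le (~` W0), dnc le (closure W)) => _; split => /=.
- apply: closed_openC; apply: closed_upc => //; exact: open_closedC.
- move=> x y xy Vy [z nz zx]; apply: Vy; exists z => //; exact: trans zx xy.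
- apply: closed_dnc => //; exact: closed_closure.
- move=> x y xy [z Wz yz]; exists z => //; exact: trans xy yz.
split.
- move=> k Kk [z nz zk]; apply: nz; apply: KW0; exact: dK zk Kk.
- move=> v Vv; exists v; last exact: refl.
  apply: subset_closure; apply: interior_subset.
  by apply: contrapT => nv; apply: Vv; exists v => //; exact: refl.
- move=> y [z Wz yz]; exact: dU yz (clWU z Wz).
Qed.

Definition interp (KU : set X * set X) : set X * set X :=
  projT1 (cid (interp_ex KU)).

Lemma interpP KU : interp_pre KU -> interp_post KU (interp KU).
Proof. exact: (projT2 (cid (interp_ex KU))). Qed.
End Interp.
Section Levels.
Context (X : topologicalType) (le : X -> X -> Prop).
Hypothesis cptX : compact [set: X].
Hypothesis hX : hausdorff_space X.
Hypothesis pre : preorder_rel le.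
Hypothesis clG : closed_preorder le.
Variables A B : set X.
Hypothesis clA : closed A.
Hypothesis dA : isdec le A.
Hypothesis clB : closed B.
Hypothesis iB : forall x y, le x y -> B x -> B y.
Hypothesis AB : forall x, A x -> B x -> False.

Let itp := @interp X le cptX hX pre clG.
Let P0 := itp (A, ~` B).
Let P1 := itp (P0.2, ~` B).

Fixpoint lvl (n k : nat) {struct n} : set X * set X :=
  match n with
  | 0 => if k == 0 then P0 else P1
  | m.+1 => if odd k then itp ((lvl m k./2).2, (lvl m (k./2).+1).1)
            else lvl m k./2
  end.

Definition good (VK : set X * set X) :=
  [/\ open VK.1, isdec le VK.1, closed VK.2, isdec le VK.2 & VK.1 `<=` VK.2].

Lemma lvlSe n j : lvl n.+1 j.*2 = lvl n j.
Proof. by rewrite /= odd_double doubleK. Qed.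

Lemma lvlSo n j : lvl n.+1 (j.*2).+1 = itp ((lvl n j).2, (lvl n j.+1).1).
Proof. by rewrite /= odd_double /= uphalf_double. Qed.

Lemma preB : interp_pre le (A, ~` B).
Proof.
split => //=.
- exact: closed_openC.
- by move=> x y xy nBy Bx; apply: nBy; exact: iB Bx.

Qed.

Lemma P0P : interp_post le (A, ~` B) P0.
Proof. exact: (@interpP X le cptX hX pre clG _ preB). Qed.

Lemma preB1 : interp_pre le (P0.2, ~` B).
Proof.
have [_ _ c d [_ _ e]] := P0P; have [_ _ f g _] := preB.
by split.
Qed.

Lemma P1P : interp_post le (P0.2, ~` B) P1.
Proof. exact: (@interpP X le cptX hX pre clG _ preB1). Qed.

Lemma post_good KU VL : interp_post le KU VL -> good VL.
Proof. by move=> [a b c d [_ e _]]; split. Qed.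

Lemma nat_parity k : k = (k./2).*2 \/ k = (k./2.*2).+1.
Proof. by rewrite -{1 3}(odd_double_half k); case: odd; [right|left]. Qed.

Lemma lvl_inv n : (forall k, (k <= 2 ^ n)%N -> good (lvl n k)) /\
  (forall k, (k < 2 ^ n)%N -> (lvl n k).2 `<=` (lvl n k.+1).1).
Proof.
elim: n => [|n [IH1 IH2]].
  split => k; rewrite expn0.
    case: k => [|[|//]] _ /=; [exact: post_good P0P | exact: post_good P1P].
  case: k => [|//] _ /=; by have [_ _ _ _ [? _ _]] := P1P.
have pre_n j : (j < 2 ^ n)%N -> interp_pre le ((lvl n j).2, (lvl n j.+1).1).
  move=> jn; have [_ _ c d _] := IH1 j (ltnW jn).
  have [a b _ _ _] := IH1 j.+1 jn; split => //=; exact: IH2.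
have ip j (jn : (j < 2 ^ n)%N) := @interpP X le cptX hX pre clG _ (pre_n _ jn).
split => k; rewrite expnS mul2n => kn; have [kE|kE] := nat_parity k;
  rewrite kE in kn *; move: (k./2) kn => j kn.
- rewrite leq_double in kn; rewrite lvlSe; exact: IH1.
- rewrite ltn_double in kn; rewrite lvlSo; apply: post_good; exact: ip.
- rewrite ltn_double in kn; rewrite lvlSe lvlSo.
  by have [_ _ _ _ [? _ _]] := ip j kn.
- rewrite -doubleS leq_double in kn; rewrite lvlSo -doubleS lvlSe.
  by have [_ _ _ _ [_ _ ?]] := ip j kn.
Qed.

Lemma lvl_lift n m k : lvl (m + n) (k * 2 ^ m) = lvl n k.
Proof.
elim: m => [|m IH]; first by rewrite expn0 muln1.
by rewrite addSn expnS mulnCA mul2n lvlSe.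
Qed.

Lemma lvl_chain n k d : (k + d.+1 <= 2 ^ n)%N ->
  (lvl n k).2 `<=` (lvl n (k + d.+1)).1.
Proof.
have [I1 I2] := lvl_inv n.
elim: d => [|d IH] h; first by rewrite addn1; apply: (I2 k); rewrite -addn1.
have h' : (k + d.+1 <= 2 ^ n)%N by apply: leq_trans h; rewrite leq_add2l.
apply: subset_trans (IH h') _.
have [_ _ _ _ s] := I1 _ h'.
apply: subset_trans s _; have -> : (k + d.+2 = (k + d.+1).+1)%N by lia.
apply: (I2 (k + d.+1)); lia.
Qed.

Lemma lvl_chain' n k j : (k < j)%N -> (j <= 2 ^ n)%N ->
  (lvl n k).2 `<=` (lvl n j).1.
Proof.
move=> kj jn; have -> : j = k + (j - k.+1).+1 by lia.
apply: (lvl_chain (k := k)); lia.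
Qed.

Lemma lvl_cross n k m j : (k <= 2 ^ n)%N -> (j <= 2 ^ m)%N ->
  (k * 2 ^ m < j * 2 ^ n)%N -> (lvl n k).2 `<=` (lvl m j).1.
Proof.
move=> kn jm kj; rewrite -(lvl_lift n m k) -(lvl_lift m n j) [(n + m)%N]addnC.
apply: (lvl_chain' kj); by rewrite expnD leq_mul2r jm orbT.
Qed.

Lemma lvl0 n : A `<=` (lvl n 0).1.
Proof.
have := lvl_lift 0 n 0; rewrite addn0 mul0n => ->.
by have [_ _ _ _ [? _ _]] := P0P.
Qed.

Lemma lvlB n k : (k <= 2 ^ n)%N -> (lvl n k).1 `<=` ~` B.
Proof.
move=> kn; have [I1 _] := lvl_inv n.
have [_ _ _ _ s] := I1 _ kn; apply: subset_trans s _.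
have top : (lvl n (2 ^ n)).2 `<=` ~` B.
  have := lvl_lift 0 n 1; rewrite addn0 mul1n => ->.
  by have [_ _ _ _ [_ _ ?]] := P1P.
move: kn; rewrite leq_eqVlt => /orP[/eqP -> //|kn].
apply: subset_trans (lvl_chain' kn (leqnn _)) _.
have [_ _ _ _ s'] := I1 _ (leqnn (2 ^ n)); exact: subset_trans s' top.
Qed.

Variable R : realType.

Definition Dset (x : X) : set R :=
  [set r | r = 1 \/ exists n k, [/\ (k <= 2 ^ n)%N, (lvl n k).1 x & r = qd n k]].
Definition gN (x : X) : R := inf (Dset x).

Lemma Dset_n0 x : Dset x !=set0.
Proof. by exists 1; left. Qed.

Lemma Dset_lb x : lbound (Dset x) 0.
Proof. by move=> r [->|[n [k [_ _ ->]]]]; [exact: ler01 | exact: qd_ge0]. Qed.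

Lemma Dset_hlb x : has_lbound (Dset x).
Proof. by exists 0; exact: Dset_lb. Qed.

Lemma gN_lb x r : Dset x r -> gN x <= r.
Proof. exact: (ge_inf (Dset_hlb x)). Qed.

Lemma gN_ge0 x : 0 <= gN x.
Proof. rewrite /gN; apply: lb_le_inf; [exact: Dset_n0 | exact: Dset_lb]. Qed.

Lemma gN_le1 x : gN x <= 1.
Proof. by apply: gN_lb; left. Qed.

Lemma gN_notK x n k : (k <= 2 ^ n)%N -> ~ (lvl n k).2 x -> qd n k <= gN x.
Proof.
move=> kn nK; rewrite /gN; apply: lb_le_inf; first exact: Dset_n0.
move=> r [->|[m [j [jm Vx ->]]]]; first exact: qd_le1.
rewrite leNgt; apply/negP; rewrite qd_lt => jk; apply: nK.
have [I1 _] := lvl_inv m; have [_ _ _ _ s] := I1 _ jm.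
have [I1' _] := lvl_inv n; have [_ _ _ _ s'] := I1' _ kn.
by apply: s'; apply: (lvl_cross jm kn jk); apply: s.
Qed.

Lemma gN_K x n k m j : (k <= 2 ^ n)%N -> (j <= 2 ^ m)%N ->
  qd n k < qd m j :> R -> (lvl n k).2 x -> gN x <= qd m j.
Proof.
move=> kn jm; rewrite qd_lt => kj Kx; apply: gN_lb; right; exists m, j.
by split => //; exact: (lvl_cross kn jm kj).
Qed.

Lemma gN_iso : isotone le (fun a b : R => a <= b) gN.
Proof.
move=> x y xy; rewrite /gN; apply: lb_le_inf; first exact: Dset_n0.
move=> r [->|[n [k [kn Vy ->]]]]; first by apply: gN_lb; left.
apply: gN_lb; right; exists n, k; split => //.
have [I1 _] := lvl_inv n; have [_ d _ _ _] := I1 _ kn; exact: d xy Vy.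
Qed.

Lemma gN_A x : A x -> gN x = 0.
Proof.
move=> Ax; apply/eqP; rewrite eq_le gN_ge0 andbT.
have -> : (0 : R) = qd 0 0 by rewrite /qd mul0r.
by apply: gN_lb; right; exists 0%N, 0%N; split => //; exact: lvl0.
Qed.

Lemma gN_B x : B x -> gN x = 1.
Proof.
move=> Bx; apply/eqP; rewrite eq_le gN_le1 /=.
rewrite /gN; apply: lb_le_inf; first exact: Dset_n0.
move=> r [->//|[n [k [kn Vx _]]]].
by exfalso; exact: (lvlB kn Vx Bx).
Qed.

Lemma gN_cont : continuous gN.
Proof.
move=> x; apply/cvgrPdist_lt => e e0.
have up : \forall y \near x, gN y < gN x + e.
  have [r Dr rlt] := inf_lt (Dset_n0 x) (ltac:(lra) : gN x < gN x + e).
  case: Dr rlt => [-> lt1 | [m [j [jm Vx ->]]] lt].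
    by apply: nearW => y; exact: le_lt_trans (gN_le1 y) lt1.
  have [I1 _] := lvl_inv m; have [o _ _ _ _] := I1 _ jm.
  have nV : nbhs x (lvl m j).1 by apply: open_nbhs_nbhs; split.
  apply: (filterS _ nV) => y Vy; apply: le_lt_trans lt; apply: gN_lb.
  by right; exists m, j.
have lo : \forall y \near x, gN x - e < gN y.
  case: (ltrP (gN x - e) 0) => h.
    by apply: nearW => y; exact: lt_le_trans h (gN_ge0 y).
  have [n [k /andP[h1 h2]]] := dyadic_dense h (ltac:(lra) : gN x - e < gN x).
  have [m [j /andP[h3 h4]]] := dyadic_dense (qd_ge0 R n k) h2.
  have kn : (k <= 2 ^ n)%N by apply: qd_lt1; exact: lt_le_trans h2 (gN_le1 x).
  have jm : (j <= 2 ^ m)%N by apply: qd_lt1; exact: lt_le_trans h4 (gN_le1 x).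
  have nK : ~ (lvl n k).2 x.
    by move=> Kx; have := gN_K kn jm h3 Kx; rewrite leNgt h4.
  have [I1 _] := lvl_inv n; have [_ _ c _ _] := I1 _ kn.
  have nn : nbhs x (~` (lvl n k).2).
    by apply: open_nbhs_nbhs; split => //; exact: closed_openC.
  apply: (filterS _ nn) => y nKy; apply: lt_le_trans h1 _; exact: gN_notK.
apply: (filterS _ (filterI up lo)) => y [u l].
rewrite ltr_norml; apply/andP; split; lra.
Qed.

Lemma sep_exists : exists g : X -> R,
  [/\ continuous g, unit_valued g, isotone le (fun a b : R => a <= b) g,
      (forall x, A x -> g x = 0) & (forall x, B x -> g x = 1)].
Proof.
exists gN; split.
- exact: gN_cont.
- by move=> x; rewrite gN_ge0 gN_le1.
- exact: gN_iso.
- exact: gN_A.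
- exact: gN_B.
Qed.
End Levels.

Lemma nachbin (R : realType) (X : topologicalType) (le : X -> X -> Prop) :
  compact [set: X] -> hausdorff_space X -> preorder_rel le -> closed_preorder le ->
  forall p q, ~ le p q -> exists g : X -> R,
   [/\ continuous g, unit_valued g, isotone le (fun a b : R => a <= b) g & g q < g p].
Proof.
move=> cX hX pr clG p q npq; have [refl trans] := pr.
have cl1 z : closed [set z] := compact_closed hX (@compact_set1 X z).
have dA : isdec le (dnc le [set q]).
  by move=> x y xy [z zq yz]; exists z => //; exact: trans xy yz.
have iB : forall x y, le x y -> upc le [set p] x -> upc le [set p] y.
  by move=> x y xy [z zp zx]; exists z => //; exact: trans zx xy.
have AB : forall x, dnc le [set q] x -> upc le [set p] x -> False.
  move=> x [z zq xz] [w wp wx]; apply: npq.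
  by rewrite /= in zq wp; subst; exact: trans wx xz.
have [g [gc gu gi gA gB]] := sep_exists cX hX pr clG
  (closed_dnc cX clG (cl1 q)) dA (closed_upc cX clG (cl1 p)) iB AB R.
exists g; split => //.
rewrite gA; last by exists q => //; exact: refl.
by rewrite gB ?ltr01 //; exists p => //; exact: refl.
Qed.

Lemma closed_eq_pre (X : topologicalType) : hausdorff_space X ->
  closed_preorder (fun a b : X => a = b).
Proof.
move=> hX; rewrite /closed_preorder -openC openE => -[x y] /= nxy.
have : ~ cluster (nbhs x) y by move=> cl; apply: nxy; exact: hX cl.
move=> /existsNP [P /existsNP [Q /not_implyP [Px /not_implyP [Qy nPQ]]]].
exists (P, Q) => //.
move=> [a b] /= [Pa Qb] ab; subst b; apply: nPQ; by exists a.
Qed.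

Lemma dense_eq (T U : topologicalType) (f g : T -> U) (S : set T) :
  hausdorff_space U -> continuous f -> continuous g -> dense S ->
  (forall x, S x -> f x = g x) -> f = g.
Proof.
move=> hU cf cg dS fg; apply/funext => x; apply: contrapT => nfg.
have : ~ cluster (nbhs (f x)) (g x) by move=> cl; apply: nfg; exact: hU cl.
move=> /existsNP [P /existsNP [Q /not_implyP [Px /not_implyP [Qy nPQ]]]].
have nO : nbhs x (f @^-1` P `&` g @^-1` Q) by apply: filterI; [exact: cf | exact: cg].
have [y [Iy Sy]] := dS _ (ex_intro _ x nO) (@open_interior _ _).
have [Py Qy'] := interior_subset Iy.
by apply: nPQ; exists (f y); split => //; rewrite fg.
Qed.
Unset Implicit Arguments.
Theorem mainTheorem5 (R : realType) (E : topologicalType)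
  (le : E -> E -> Prop)
  (bE : topologicalType) (b : E -> bE)
  (cE : topologicalType) (lec : cE -> cE -> Prop) (c : E -> cE) :
  preorder_rel le ->
  closed_preorder le ->
  tychonoff_space R E ->
  (forall x y, le x y <->
     (forall f : E -> R, cont_isotone_unit le f -> f x <= f y)) ->
  stone_cech b ->
  hausdorff_T2_preorder_compactification le lec c ->
  (forall f : E -> R, continuous f -> unit_valued f ->
     exists g : cE -> R,
       [/\ continuous g, unit_valued g & forall x, g (c x) = f x]) ->
  (forall f : E -> R, cont_isotone_unit le f ->
     exists g : cE -> R,
       [/\ continuous g, unit_valued g, isotone lec (fun a b : R => a <= b) g
         & forall x, g (c x) = f x]) ->
  compactification_equiv lec (le_beta R le b) c b.
Proof.
move=> _ _ _ _ [cbE hbE [bcont binj bopen] dbE SC].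
move=> [ccE hcE pre_c cl_c [[[ccont cinj copen] cord] dcE]] ext_a ext_b.
have hR : hausdorff_space R := @norm_hausdorff _ _.
have [h [hcont hb]] := SC cE c ccE hcE ccont.
have hsurj : forall y, exists u, h u = y.
  move=> y; apply: contrapT => ny.
  have cim : compact (h @` setT) :=
    continuous_compact (continuous_subspaceT hcont) cbE.
  have clim := compact_closed hcE cim.
  have ne : (~` (h @` setT)) !=set0 by exists y => -[u _ hu]; apply: ny; exists u.
  have [z [nz [x _ cx]]] := dcE _ ne (closed_openC clim).
  by apply: nz; exists (b x) => //; rewrite hb.
have hinj : injective h.
  move=> u v huv; apply: contrapT => nuv.
  have [phi [phic phiu _ phil]] :=
    nachbin R cbE hbE (conj (fun x => erefl x) (fun x y z => @eq_trans _ x y z))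
      (closed_eq_pre hbE) nuv.
  have phibc : continuous (phi \o b).
    by move=> x; apply: continuous_comp; [exact: bcont | exact: phic].
  have [psi [psic psiu psie]] := ext_a (phi \o b) phibc (fun x => phiu (b x)).
  have e : psi \o h = phi.
    apply: (dense_eq hR _ phic dbE).
      by move=> x; apply: continuous_comp; [exact: hcont | exact: psic].
    by move=> z [x _ <-] /=; rewrite hb psie.
  move: phil; rewrite -e /= huv; by rewrite ltxx.
pose k (y : cE) : bE := projT1 (cid (hsurj y)).
have hk y : h (k y) = y by rewrite /k; case: cid.
have kh u : k (h u) = u by apply: hinj; rewrite hk.
have kcont : continuous k.
  apply/continuousP => U oU.
  have -> : k @^-1` U = ~` (h @` (~` U)).
    apply/seteqP; split => y /=.
      by move=> Uk [u nu hu]; apply: nu; rewrite -hu kh in Uk.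
    move=> nh; apply: contrapT => nU; apply: nh; exists (k y) => //.
  apply: closed_openC; apply: (compact_closed hcE).
  apply: continuous_compact; first exact: continuous_subspaceT.
  by apply: (subclosed_compact _ cbE) => //; exact: open_closedC.
split.
  exists h; split => //.
  move=> u v luv; apply: contrapT => nl.
  have [g [gc gu gi glt]] := nachbin R ccE hcE pre_c cl_c nl.
  have gcc : continuous (g \o c).
    by move=> x; apply: continuous_comp; [exact: ccont | exact: gc].
  have F : cont_isotone_unit le (g \o c).
    split => //; first by move=> x; exact: gu.
    by move=> x y lxy; apply: gi; exact: (proj1 (cord x y)).
  have ghc : continuous (g \o h).
    by move=> x; apply: continuous_comp; [exact: hcont | exact: gc].
  have := luv (g \o c) F (g \o h) ghc (fun x => ltac:(by rewrite /= hb)).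
  by rewrite /= leNgt glt.
exists k; split => //.
  move=> p q lpq f Ff g gc gb.
  have [g' [g'c g'u g'i g'e]] := ext_b f Ff.
  have eq : g' \o h = g.
    apply: (dense_eq hR _ gc dbE).
      by move=> x; apply: continuous_comp; [exact: hcont | exact: g'c].
    by move=> z [x _ <-] /=; rewrite hb g'e gb.
  by rewrite -eq /= !hk; exact: g'i.
by move=> x; apply: hinj; rewrite hk hb.
Qed.
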